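(* Let $k\geq 3$, $A=\{0,1,\dots,k-1\}$ and $n=k-1$. Let $T\colon A^{n^2}\to A$ be the $n^2$-ary operation whose arguments are written as $x_{1,1},\dots,x_{1,n},x_{2,1},\dots,x_{2,n},\dots,x_{n,1},\dots,x_{n,n}$ (row by row), defined by $T(x_{1,1},\dots,x_{n,n})=1$ if $x_{i,j}=i$ for all $i,j\in\{1,\dots,n\}$ or $x_{i,j}=j$ for all $i,j\in\{1,\dots,n\}$, and $T(x_{1,1},\dots,x_{n,n})=0$ otherwise. Let $f\colon A^n\to A$ be given by $f(\mathbf{x})=1$ if $\mathbf{x}\in\{(1,2,\dots,n),(n,n-1,\dots,1)\}$ and $f(\mathbf{x})=0$ otherwise. For variables $x_{i,j}$ ($1\leq i,j\leq n$) write $\swarrow = (x_{1,n},x_{2,n-1},\dots,x_{n-1,2},x_{n,1})$, $\nearrow=(x_{n,1},x_{n-1,2},\dots,x_{2,n-1},x_{1,n})$, and for $1\leq i\leq n$: $\rightarrow_i=(x_{i,1},\dots,x_{i,n})$, $\leftarrow_i=(x_{i,n},\dots,x_{i,1})$, $\downarrow_i=(x_{1,i},\dots,x_{n,i})$, $\uparrow_i=(x_{n,i},\dots,x_{1,i})$; an expression $T(\mathbf{s}_1,\dots,\mathbf{s}_n)$ with $n$-tuples $\mathbf{s}_i$ means $T$ applied to the concatenation of these tuples. Then \[ \{(\swarrow,y)\in A^k : f(\swarrow)=y\} =\Bigl\{(\swarrow,y)\in A^k : \exists\, (x_{i,j})_{1\leq i,j\leq n,\ i+j\neq k}\in A\colon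 T(\rightarrow_1,\dots,\rightarrow_n)=y,\ T(\swarrow,\dots,\swarrow)=T(\rightarrow_1,\leftarrow_2,\dots,\leftarrow_n),\ T(\nearrow,\dots,\nearrow)=T(\downarrow_1,\uparrow_2,\dots,\uparrow_n)\Bigr\}, \] and this set also equals \[ \Bigl\{(\swarrow,y)\in A^k : \exists\, (x_{i,j})_{i+j\neq k}\in A\ \exists u,v\in A\colon T(\rightarrow_1,\dots,\rightarrow_n)=y\wedge T(\swarrow,\dots,\swarrow)=u\wedge T(\rightarrow_1,\leftarrow_2,\dots,\leftarrow_n)=u\wedge T(\nearrow,\dots,\nearrow)=v\wedge T(\downarrow_1,\uparrow_2,\dots,\uparrow_n)=v\Bigr\}. \] In particular the graph of $f$ is primitive positively definable from the graph of $T$.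
   Context: Here $(\swarrow,y)$ denotes the $k$-tuple $(x_{1,n},x_{2,n-1},\dots,x_{n,1},y)$; the variables $x_{i,j}$ with $i+j=k$ (the entries of $\swarrow$) are free and all other $x_{i,j}$ are existentially quantified. *)

(* Defs.v *)
From mathcomp Require Import all_boot.
Set Implicit Arguments. Unset Strict Implicit. Unset Printing Implicit Defensive.

(* Convention: k = n.+1, A = 'I_n.+1 = {0,...,k-1}; indices 1..n of the paper
   are represented 0-based by 'I_n (paper index i+1 <-> ordinal i). *)

(* An n^2-ary argument tuple, written row by row: M i j = x_{i+1,j+1}. *)
Definition sq_args (n : nat) := 'I_n -> 'I_n -> 'I_n.+1.

Definition T (n : nat) (M : sq_args n) : 'I_n.+1 :=
  if [forall i : 'I_n, forall j : 'I_n, val (M i j) == i.+1]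
     || [forall i : 'I_n, forall j : 'I_n, val (M i j) == j.+1]
  then inord 1 else ord0.

Definition f (n : nat) (s : 'I_n -> 'I_n.+1) : 'I_n.+1 :=
  if [forall i : 'I_n, val (s i) == i.+1] || [forall i : 'I_n, val (s i) == n - i]
  then inord 1 else ord0.

Section Paths.
Variables (n : nat) (x : 'I_n -> 'I_n -> 'I_n.+1).
Definition sw (j : 'I_n) : 'I_n.+1 := x j (rev_ord j).
Definition ne (j : 'I_n) : 'I_n.+1 := x (rev_ord j) j.
Definition rows_args : sq_args n := fun i j => x i j.
Definition sw_args : sq_args n := fun _ j => sw j.
Definition ne_args : sq_args n := fun _ j => ne j.
Definition snake_rows_args : sq_args n :=
  fun i j => if val i == 0 then x i j else x i (rev_ord j).
Definition snake_cols_args : sq_args n :=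
  fun i j => if val i == 0 then x j i else x (rev_ord j) i.
End Paths.

(* Main.v *)
Set Warnings "-notation-overridden".
Set Implicit Arguments. Unset Strict Implicit.
Require Import Defs.
From mathcomp Require Import all_boot.
From mathcomp Require Import zify.

Definition PR n (M : 'I_n -> 'I_n -> 'I_n.+1) := [forall i : 'I_n, forall j : 'I_n, val (M i j) == i.+1].
Definition PC n (M : 'I_n -> 'I_n -> 'I_n.+1) := [forall i : 'I_n, forall j : 'I_n, val (M i j) == j.+1].

Lemma PRP n (M : 'I_n -> 'I_n -> 'I_n.+1) : reflect (forall i j : 'I_n, nat_of_ord (M i j) = i.+1) (PR M).
Proof.
apply: (iffP forallP) => H i.
  by move=> j; exact: (eqP (forallP (H i) j)).
by apply/forallP => j; apply/eqP; exact: H.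
Qed.
Lemma PCP n (M : 'I_n -> 'I_n -> 'I_n.+1) : reflect (forall i j : 'I_n, nat_of_ord (M i j) = j.+1) (PC M).
Proof.
apply: (iffP forallP) => H i.
  by move=> j; exact: (eqP (forallP (H i) j)).
by apply/forallP => j; apply/eqP; exact: H.
Qed.

Lemma TE n (M : 'I_n -> 'I_n -> 'I_n.+1) : T M = if PR M || PC M then inord 1 else ord0.
Proof. by []. Qed.

Lemma FAP n (s : 'I_n -> 'I_n.+1) :
  reflect (forall i : 'I_n, nat_of_ord (s i) = i.+1) [forall i : 'I_n, val (s i) == i.+1].
Proof. apply: (iffP forallP) => H i; [exact: (eqP (H i))|apply/eqP; exact: H]. Qed.
Lemma FBP n (s : 'I_n -> 'I_n.+1) :
  reflect (forall i : 'I_n, nat_of_ord (s i) = n - i) [forall i : 'I_n, val (s i) == n - i].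
Proof. apply: (iffP forallP) => H i; [exact: (eqP (H i))|apply/eqP; exact: H]. Qed.

Lemma fE n (s : 'I_n -> 'I_n.+1) : f s =
  if [forall i : 'I_n, val (s i) == i.+1] || [forall i : 'I_n, val (s i) == n - i]
  then inord 1 else ord0.
Proof. by []. Qed.

Section Main.
Variable m : nat.
Local Notation n := m.+2.

Lemma one_ne0 : (inord 1 : 'I_n.+1) != ord0.
Proof. by apply/eqP => /(congr1 val) /=; rewrite inordK. Qed.

Definition o1 : 'I_n := inord 1.
Lemma o1E : nat_of_ord o1 = 1. Proof. by rewrite /o1 inordK. Qed.

Lemma T1E (M : sq_args n) : T M = inord 1 -> PR M || PC M.
Proof. rewrite TE; case: ifP => // _ /eqP; by rewrite eq_sym (negbTE one_ne0). Qed.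
Lemma T1I (M : sq_args n) : PR M || PC M -> T M = inord 1.
Proof. by rewrite TE => ->. Qed.
Lemma T0I (M : sq_args n) : PR M || PC M = false -> T M = ord0.
Proof. by rewrite TE => ->. Qed.

Lemma sw_PR (x : 'I_n -> 'I_n -> 'I_n.+1) : PR (sw_args x) = false.
Proof.
apply/negP => /PRP H; have := H ord0 ord0; have := H o1 ord0.
rewrite /sw_args o1E => ->; rewrite /=; lia.
Qed.
Lemma ne_PR (x : 'I_n -> 'I_n -> 'I_n.+1) : PR (ne_args x) = false.
Proof.
apply/negP => /PRP H; have := H ord0 ord0; have := H o1 ord0.
rewrite /ne_args o1E => ->; rewrite /=; lia.
Qed.

Lemma main1 (d : 'I_n -> 'I_n.+1) (y : 'I_n.+1) :
    (f d = y <->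
     exists x : 'I_n -> 'I_n -> 'I_n.+1,
       (forall i : 'I_n, x i (rev_ord i) = d i) /\
       T (rows_args x) = y /\
       T (sw_args x) = T (snake_rows_args x) /\
       T (ne_args x) = T (snake_cols_args x)).
Proof.
split.
- move=> <-.
  case FA: [forall i : 'I_n, val (d i) == i.+1].
  + move/FAP: FA => FA.
    exists (fun i j => inord i.+1); split.
      by move=> i; apply: val_inj; rewrite /= inordK ?FA // ltnS ltn_ord.
    rewrite !TE fE /=.
    have -> : PR (rows_args (fun i _ : 'I_n => (inord i.+1 : 'I_n.+1))).
      by apply/PRP => i j; rewrite /rows_args inordK // ltnS ltn_ord.
    have -> : PC (sw_args (fun i _ : 'I_n => (inord i.+1 : 'I_n.+1))).
      by apply/PCP => i j; rewrite /sw_args /sw inordK // ltnS ltn_ord.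
    have -> : PR (snake_rows_args (fun i _ : 'I_n => (inord i.+1 : 'I_n.+1))).
      by apply/PRP => i j; rewrite /snake_rows_args; case: ifP; rewrite inordK // ltnS ltn_ord.
    have -> : [forall i : 'I_n, val (d i) == i.+1] by apply/FAP.
    rewrite /= ; split => //.
    have -> : PR (ne_args (fun i _ : 'I_n => (inord i.+1 : 'I_n.+1))) = false.
      apply/negP => /PRP /(_ ord0 ord0); rewrite /ne_args /ne inordK //=; lia.
    have -> : PC (ne_args (fun i _ : 'I_n => (inord i.+1 : 'I_n.+1))) = false.
      apply/negP => /PCP /(_ ord0 ord0); rewrite /ne_args /ne inordK //=; lia.
    have -> : PR (snake_cols_args (fun i _ : 'I_n => (inord i.+1 : 'I_n.+1))) = false.
      apply/negP => /PRP /(_ ord0 o1); rewrite /snake_cols_args /= inordK ?o1E //; lia.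
    have -> : PC (snake_cols_args (fun i _ : 'I_n => (inord i.+1 : 'I_n.+1))) = false.
      apply/negP => /PCP /(_ o1 ord0); rewrite /snake_cols_args /= o1E /= inordK //=; lia.
    by rewrite orbT.
  case FB: [forall i : 'I_n, val (d i) == n - i].
  + move/FBP: FB => FB.
    exists (fun i j => inord j.+1); split.
      by move=> i; apply: val_inj; rewrite /= inordK ?FB //=; have := ltn_ord i; lia.
    rewrite fE !TE.
    have -> : PC (rows_args (fun _ j : 'I_n => (inord j.+1 : 'I_n.+1))).
      by apply/PCP => i j; rewrite /rows_args inordK // ltnS ltn_ord.
    have -> : PR (snake_cols_args (fun _ j : 'I_n => (inord j.+1 : 'I_n.+1))).
      by apply/PRP => i j; rewrite /snake_cols_args; case: ifP; rewrite inordK // ltnS ltn_ord.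
    have -> : [forall i : 'I_n, val (d i) == n - i] by apply/FBP.
    rewrite /= orbT orbT; split => //; split => //.
    have -> : PR (sw_args (fun _ j : 'I_n => (inord j.+1 : 'I_n.+1))) = false.
      apply/negP => /PRP /(_ ord0 ord0); rewrite /sw_args /sw inordK //=; lia.
    have -> : PC (sw_args (fun _ j : 'I_n => (inord j.+1 : 'I_n.+1))) = false.
      apply/negP => /PCP /(_ ord0 ord0); rewrite /sw_args /sw inordK //=; lia.
    have -> : PR (snake_rows_args (fun _ j : 'I_n => (inord j.+1 : 'I_n.+1))) = false.
      apply/negP => /PRP /(_ ord0 o1); rewrite /snake_rows_args /= inordK ?o1E //; lia.
    have -> : PC (snake_rows_args (fun _ j : 'I_n => (inord j.+1 : 'I_n.+1))) = false.
      apply/negP => /PCP /(_ o1 ord0); rewrite /snake_rows_args /= o1E /= inordK //=; lia.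
    by [].
  + exists (fun i j => if j == rev_ord i then d i else ord0); split.
      by move=> i; rewrite eqxx.
    have Z : forall M : sq_args n, val (M ord0 ord0) = 0 -> T M = ord0.
      move=> M HM; rewrite TE; case: ifP => //; case/orP => [/PRP|/PCP] /(_ ord0 ord0); rewrite HM //.
    have ne0 : (ord0 : 'I_n) == rev_ord ord0 = false by apply/eqP => /(congr1 val) /=.
    rewrite fE FA FB /= Z /rows_args ?ne0 //; split => //.
    rewrite (@T0I (sw_args _)); last first.
      rewrite sw_PR /=; apply/negP => /PCP H; move/negP: FA; apply; apply/FAP => i.
      by rewrite -(H ord0) /sw_args /sw eqxx.
    rewrite Z /snake_rows_args /= ?ne0 //; split => //.
    rewrite (@T0I (ne_args _)); last first.
      rewrite ne_PR /=; apply/negP => /PCP H; move/negP: FB; apply; apply/FBP => i.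
      have := H ord0 (rev_ord i); rewrite /ne_args /ne rev_ordK eqxx /=.
      rewrite rev_ordK; have := ltn_ord i; lia.
    by rewrite Z /snake_cols_args /= ?ne0.
- move=> [x [Hd [Hr [Hs Hn]]]].
  rewrite -Hr fE TE.
  case Hrow: (PR (rows_args x) || PC (rows_args x)).
    case/orP: Hrow => [/PRP H|/PCP H].
      rewrite (_ : [forall i : 'I_n, val (d i) == i.+1] = true) //.
      by apply/FAP => i; rewrite -Hd H.
    rewrite (_ : [forall i : 'I_n, val (d i) == n - i] = true) ?orbT //.
    apply/FBP => i; rewrite -Hd H /=; have := ltn_ord i; lia.
  case FA: [forall i : 'I_n, val (d i) == i.+1].
    move/FAP: FA => FA; exfalso.
    have : PR (snake_rows_args x) || PC (snake_rows_args x).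
      apply: T1E; rewrite -Hs; apply: T1I; rewrite sw_PR /=.
      by apply/PCP => i j; rewrite /sw_args /sw Hd FA.
    case/orP => [/PRP H|/PCP H].
      move/negP: Hrow; apply; apply/orP; left; apply/PRP => i j.
      have := H i (if val i == 0 then j else rev_ord j).
      by rewrite /snake_rows_args /rows_args; case: (val i == 0); rewrite /= ?rev_ordK.
    have := H ord0 (rev_ord ord0); rewrite /snake_rows_args /= Hd FA /=; lia.
  case FB: [forall i : 'I_n, val (d i) == n - i] => //.
  move/FBP: FB => FB; exfalso.
  have : PR (snake_cols_args x) || PC (snake_cols_args x).
    apply: T1E; rewrite -Hn; apply: T1I; rewrite ne_PR /=.
    apply/PCP => i j; rewrite /ne_args /ne. have := Hd (rev_ord j); rewrite rev_ordK => ->; rewrite FB /=; have := ltn_ord j; lia.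
  case/orP => [/PRP H|/PCP H].
    move/negP: Hrow; apply; apply/orP; right; apply/PCP => a b.
    case: (eqVneq (val b) 0) => [b0|bn0].
      by have := H ord0 a; rewrite /snake_cols_args /= b0 (_ : b = ord0) //; apply: val_inj.
    have := H b (rev_ord a); rewrite /snake_cols_args /= (negbTE bn0) rev_ordK //.
  have := H ord0 (rev_ord ord0); rewrite /snake_cols_args /=.
  have := Hd (rev_ord ord0); rewrite rev_ordK => ->; rewrite FB /=; lia.
Qed.
End Main.

Theorem theorem3p13 (n : nat) (hn : 2 <= n) :
  forall (d : 'I_n -> 'I_n.+1) (y : 'I_n.+1),
    (f d = y <->
     exists x : 'I_n -> 'I_n -> 'I_n.+1,
       (forall i : 'I_n, x i (rev_ord i) = d i) /\
       T (rows_args x) = y /\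
       T (sw_args x) = T (snake_rows_args x) /\
       T (ne_args x) = T (snake_cols_args x))
    /\
    (f d = y <->
     exists x : 'I_n -> 'I_n -> 'I_n.+1,
       (forall i : 'I_n, x i (rev_ord i) = d i) /\
       exists u v : 'I_n.+1,
         [/\ T (rows_args x) = y, T (sw_args x) = u, T (snake_rows_args x) = u,
             T (ne_args x) = v & T (snake_cols_args x) = v]).
Proof.
case: n hn => [|[|m]] // _ d y.
have H := main1 d y; split => //.
rewrite H; split.
  move=> [x [Hd [Hr [Hs Hn]]]]; exists x; split => //.
  by exists (T (sw_args x)), (T (ne_args x)).
move=> [x [Hd [u [v [Hr Hs Hs' Hn Hn']]]]]; exists x; split => //.
by rewrite Hs Hs' Hn Hn'.
Qed.
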